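(* Let $\gamma$ be a consistent family of grafts for a tree $\mathcal T$ and let $B$ be a branch in $\mathcal H=\mathrm{hybr}(\mathcal T,\gamma)$. (a) If $\mathcal G\in\gamma$ and $B\cap\mathrm{nodes}\,\mathcal G\ne\emptyset$, then $B\cap\mathrm{nodes}\,\mathcal G$ is a branch in $\mathcal G$. (b) If every graft in $\gamma$ has bounded chains, then $B\cap\mathrm{supp}(\mathcal T,\gamma)$ is cofinal in $B$ with respect to $\mathcal H$, i.e. for every $b\in B$ there is $c\in B\cap\mathrm{supp}(\mathcal T,\gamma)$ with $b\le_{\mathcal H}c$.
   Context: A tree is a pair $(Q,<)$ with $<$ irreflexive transitive and each set of predecessors well-ordered; a chain is a set of pairwise comparable nodes, a branch an inclusion-maximal chain; the tree has bounded chains if every nonempty chain $C$ has a node $z$ with $c\le z$ for all $c\in C$; $\max\mathcal T$ = maximal nodes; $A{\downarrow}_{\mathcal T}=\{v:\exists a\in A\ a\le_{\mathcal T}v\}$; $x\parallel_{\mathcal T}y$ means incomparable; for an antichain $A$ and $x\in A{\downarrow}_{\mathcal T}$, $\mathrm{root}_{\mathcal T}(x,A)$ is the unique $r\in A$ with $r\le_{\mathcal T}x$. A graft for $\mathcal T$ is a tree $\mathcal G$ with more than one node, least node $0_{\mathcal G}\in\mathrm{nodes}\,\mathcal T$, with $\max\mathcal G\subseteq\{v\in\mathrm{nodes}\,\mathcal T:v>_{\mathcal T}0_{\mathcal G}\}$ an antichain in $\mathcal T$, and $\mathrm{impl}\,\mathcal G:=\mathrm{nodes}\,\mathcal G\setminus(\{0_{\mathcal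 G}\}\cup\max\mathcal G)$ disjoint from $\mathrm{nodes}\,\mathcal T$; $\mathrm{expl}(\mathcal T,\mathcal G)=\{v:v>_{\mathcal T}0_{\mathcal G}\}\setminus(\max\mathcal G){\downarrow}_{\mathcal T}$. $\gamma$ is a consistent family of grafts for $\mathcal T$ if its members are grafts for $\mathcal T$ with pairwise disjoint implants and for distinct $\mathcal D,\mathcal E\in\gamma$: $0_{\mathcal D}\parallel_{\mathcal T}0_{\mathcal E}$ or $0_{\mathcal D}\in(\max\mathcal E){\downarrow}_{\mathcal T}$ or $0_{\mathcal E}\in(\max\mathcal D){\downarrow}_{\mathcal T}$. $\mathrm{supp}(\mathcal T,\gamma)=\mathrm{nodes}\,\mathcal T\setminus\bigcup_{\mathcal G\in\gamma}\mathrm{expl}(\mathcal T,\mathcal G)$. $\mathrm{hybr}(\mathcal T,\gamma)=(H,<)$ where $H=\mathrm{supp}(\mathcal T,\gamma)\cup\bigcup_{\mathcal G\in\gamma}\mathrm{impl}\,\mathcal G$ and $x<y$ iff: (b1) $x,y\in\mathrm{supp}$, $x<_{\mathcal T}y$; or (b2) $x,y\in\mathrm{impl}\,\mathcal G$, $x<_{\mathcal G}y$ for some $\mathcal G\in\gamma$; or (b3) $x\in\mathrm{supp}$, $y\in\mathrm{impl}\,\mathcal G$, $x\le_{\mathcal T}0_{\mathcal G}$; or (b4) $x\in\mathrm{impl}\,\mathcal G$, $y\in\mathrm{supp}\cap(\max\mathcal G){\downarrow}_{\mathcal T}$, $x<_{\mathcal G}\mathrm{root}_{\mathcal T}(y,\max\mathcal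 G)$; or (b5) for distinct $\mathcal D,\mathcal E\in\gamma$: $x\in\mathrm{impl}\,\mathcal D$, $y\in\mathrm{impl}\,\mathcal E$, $0_{\mathcal E}\in(\max\mathcal D){\downarrow}_{\mathcal T}$, $x<_{\mathcal D}\mathrm{root}_{\mathcal T}(0_{\mathcal E},\max\mathcal D)$. It is a tree. *)

(* Defs.v *)
Set Implicit Arguments.

Section Trees.
Variable U : Type.

Record tree := Tree { nodes : U -> Prop; tlt : U -> U -> Prop }.

Definition tle (T : tree) (x y : U) : Prop :=
  (x = y /\ nodes T x) \/ tlt T x y.

Definition is_tree (T : tree) : Prop :=
  (forall x y, tlt T x y -> nodes T x /\ nodes T y) /\
  (forall x, ~ tlt T x x) /\
  (forall x y z, tlt T x y -> tlt T y z -> tlt T x z) /\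
  (forall x, nodes T x -> forall S : U -> Prop,
      (forall s, S s -> tlt T s x) -> (exists s, S s) ->
      exists m, S m /\ forall s, S s -> tle T m s).

Definition comparable (T : tree) (x y : U) : Prop := tle T x y \/ tle T y x.
Definition incomparable (T : tree) (x y : U) : Prop := ~ comparable T x y.

Definition chain (T : tree) (C : U -> Prop) : Prop :=
  (forall x, C x -> nodes T x) /\ (forall x y, C x -> C y -> comparable T x y).

Definition branch (T : tree) (B : U -> Prop) : Prop :=
  chain T B /\ forall C, chain T C -> (forall x, B x -> C x) -> forall x, C x -> B x.

Definition bounded_chains (T : tree) : Prop :=
  forall C, chain T C -> (exists c, C c) ->
    exists z, nodes T z /\ forall c, C c -> tle T c z.

Definition maxn (T : tree) (v : U) : Prop := nodes T v /\ ~ exists w, tlt T v w.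

Definition least (T : tree) (z : U) : Prop :=
  nodes T z /\ forall v, nodes T v -> tle T z v.

Definition down (T : tree) (A : U -> Prop) (v : U) : Prop :=
  exists a, A a /\ tle T a v.

Definition antichain (T : tree) (A : U -> Prop) : Prop :=
  (forall x, A x -> nodes T x) /\
  (forall x y, A x -> A y -> x <> y -> incomparable T x y).

Definition impl (G : tree) (v : U) : Prop :=
  nodes G v /\ ~ least G v /\ ~ maxn G v.

Definition graft (T G : tree) : Prop :=
  is_tree G /\
  (exists a b, nodes G a /\ nodes G b /\ a <> b) /\
  (exists z, least G z /\ nodes T z /\
     (forall v, maxn G v -> nodes T v /\ tlt T z v)) /\
  antichain T (maxn G) /\
  (forall v, impl G v -> ~ nodes T v).

Definition expl (T G : tree) (v : U) : Prop :=
  exists z, least G z /\ tlt T z v /\ ~ down T (maxn G) v.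

(* gamma is given as an indexed family g : I -> tree *)
Definition consistent (T : tree) (I : Type) (g : I -> tree) : Prop :=
  (forall i, graft T (g i)) /\
  (forall i j, i <> j -> forall v, impl (g i) v -> ~ impl (g j) v) /\
  (forall i j, i <> j -> forall zi zj, least (g i) zi -> least (g j) zj ->
     incomparable T zi zj \/ down T (maxn (g j)) zi \/ down T (maxn (g i)) zj).

Definition supp (T : tree) (I : Type) (g : I -> tree) (v : U) : Prop :=
  nodes T v /\ ~ exists i, expl T (g i) v.

Definition hybr_nodes (T : tree) (I : Type) (g : I -> tree) (v : U) : Prop :=
  supp T g v \/ exists i, impl (g i) v.

(* root_T(y, A) = r  is expressed relationally: A r /\ r <=_T y *)
Definition hybr_lt (T : tree) (I : Type) (g : I -> tree) (x y : U) : Prop :=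
  (supp T g x /\ supp T g y /\ tlt T x y) \/
  (exists i, impl (g i) x /\ impl (g i) y /\ tlt (g i) x y) \/
  (exists i, supp T g x /\ impl (g i) y /\
     exists z, least (g i) z /\ tle T x z) \/
  (exists i, impl (g i) x /\ supp T g y /\ down T (maxn (g i)) y /\
     exists r, maxn (g i) r /\ tle T r y /\ tlt (g i) x r) \/
  (exists i j, i <> j /\ impl (g i) x /\ impl (g j) y /\
     exists zj, least (g j) zj /\ down T (maxn (g i)) zj /\
     exists r, maxn (g i) r /\ tle T r zj /\ tlt (g i) x r).

Definition hybr (T : tree) (I : Type) (g : I -> tree) : tree :=
  Tree (hybr_nodes T g) (hybr_lt T g).

End Trees.

(* Main.v *)
Require Import Defs.
From Stdlib Require Import Classical.
Set Implicit Arguments.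
Unset Strict Implicit.

Section Gen.
Variable U : Type.

Lemma tr_nodes (X : tree U) x y : is_tree X -> tlt X x y -> nodes X x /\ nodes X y.
Proof. intros [H _]; apply H. Qed.
Lemma tr_irr (X : tree U) : is_tree X -> forall x, ~ tlt X x x.
Proof. intros [_ [H _]]; exact H. Qed.
Lemma tr_trans (X : tree U) x y z : is_tree X -> tlt X x y -> tlt X y z -> tlt X x z.
Proof. intros [_ [_ [H _]]]; eapply H. Qed.

Lemma tle_lt (X : tree U) x y z : is_tree X -> tle X x y -> tlt X y z -> tlt X x z.
Proof. intros HX [[e _]|h] h2. subst; auto. eapply tr_trans; eauto. Qed.
Lemma lt_tle (X : tree U) x y z : is_tree X -> tlt X x y -> tle X y z -> tlt X x z.
Proof. intros HX h [[e _]|h2]. subst; auto. eapply tr_trans; eauto. Qed.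
Lemma tle_trans (X : tree U) x y z : is_tree X -> tle X x y -> tle X y z -> tle X x z.
Proof. intros HX h [[e _]|h2]. subst; auto. right; eapply tle_lt; eauto. Qed.
Lemma lt_le (X : tree U) x y : tlt X x y -> tle X x y.
Proof. intros; right; auto. Qed.
Lemma le_refl (X : tree U) x : nodes X x -> tle X x x.
Proof. intros; left; auto. Qed.
Lemma le_lt_false (X : tree U) x y : is_tree X -> tle X x y -> tlt X y x -> False.
Proof. intros HX h1 h2. apply (tr_irr HX (x:=x)). eapply tle_lt; eauto. Qed.
Lemma tle_nodes (X : tree U) x y : is_tree X -> tle X x y -> nodes X x /\ nodes X y.
Proof. intros HX [[e h]|h]. subst; auto. eapply tr_nodes; eauto. Qed.

Lemma pred_lin (X : tree U) a b t : is_tree X -> tle X a t -> tle X b t -> comparable X a b.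
Proof.
  intros HX [[e ha]|ha] hb.
  - subst. right. auto.
  - destruct hb as [[e hb]|hb].
    + subst. left. right. auto.
    + destruct HX as [HN [HI [HTr HW]]].
      destruct (HW t (proj2 (HN _ _ ha)) (fun s => s = a \/ s = b)) as [m [[e|e] Hm]].
      * intros s [e|e]; subst; auto.
      * exists a; auto.
      * subst. left. apply Hm. auto.
      * subst. right. apply Hm. auto.
Qed.

Lemma least_unique (X : tree U) z z' : is_tree X -> least X z -> least X z' -> z = z'.
Proof.
  intros HX [h1 h2] [h3 h4].
  destruct (h2 z' h3) as [[e _]|l]; auto.
  exfalso. exact (le_lt_false HX (h4 z h1) l).
Qed.

Lemma comp_sym (X : tree U) x y : comparable X x y -> comparable X y x.
Proof. unfold comparable; tauto. Qed.

End Gen.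

Section Hy.
Variables (U : Type) (T : tree U) (I : Type) (g : I -> tree U).
Hypothesis HT : is_tree T.
Hypothesis Hc : consistent T g.

Notation S := (supp T g).
Notation HL := (hybr_lt T g).
Notation HN := (hybr_nodes T g).
Notation H := (hybr T g).

Lemma gtree i : is_tree (g i).
Proof. destruct Hc as [Hg _]. destruct (Hg i) as [h _]. exact h. Qed.

Lemma ex_least i : exists z, least (g i) z.
Proof. destruct Hc as [Hg _]. destruct (Hg i) as [_ [_ [[z [h _]] _]]]. eauto. Qed.

Lemma max_prop i z m : least (g i) z -> maxn (g i) m -> nodes T m /\ tlt T z m.
Proof.
  intros Lz Mm. destruct Hc as [Hg _]. destruct (Hg i) as [Hti [_ [[z0 [L0 [_ Hm]]] _]]].
  rewrite (least_unique Hti Lz L0). auto.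
Qed.

Lemma z_T i z : least (g i) z -> nodes T z.
Proof.
  intros Lz. destruct Hc as [Hg _]. destruct (Hg i) as [Hti [_ [[z0 [L0 [h _]]] _]]].
  rewrite (least_unique Hti Lz L0). auto.
Qed.

Lemma max_T i m : maxn (g i) m -> nodes T m.
Proof. intros Mm. destruct (ex_least i) as [z Lz]. exact (proj1 (max_prop Lz Mm)). Qed.

Lemma anti i m m' : maxn (g i) m -> maxn (g i) m' -> tle T m m' -> m = m'.
Proof.
  intros M1 M2 Le. destruct Hc as [Hg _]. destruct (Hg i) as [_ [_ [_ [[_ HA] _]]]].
  destruct (classic (m = m')) as [e|ne]; auto.
  exfalso. apply (HA m m' M1 M2 ne). left. exact Le.
Qed.

Lemma impl_notT i v : impl (g i) v -> ~ nodes T v.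
Proof. destruct Hc as [Hg _]. destruct (Hg i) as [_ [_ [_ [_ h]]]]. exact (h v). Qed.

Lemma impl_uniq i j v : impl (g i) v -> impl (g j) v -> i = j.
Proof.
  intros h1 h2. destruct (classic (i = j)) as [e|ne]; auto.
  destruct Hc as [_ [Hd _]]. exfalso. exact (Hd i j ne v h1 h2).
Qed.

Lemma cons_down i j zi zj : i <> j -> least (g i) zi -> least (g j) zj -> tle T zi zj ->
  down T (maxn (g i)) zj.
Proof.
  intros ne Li Lj Le. destruct Hc as [_ [_ Hk]].
  destruct (Hk i j ne zi zj Li Lj) as [h|[h|h]]; auto.
  - exfalso. apply h. left. exact Le.
  - exfalso. destruct h as [a [Ma La]].
    destruct (max_prop Lj Ma) as [_ l].
    apply (tr_irr HT (x:=a)). apply (tle_lt HT La). apply (tle_lt HT Le). exact l.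
Qed.

Lemma supp_T v : S v -> nodes T v.
Proof. intros [h _]; exact h. Qed.

Lemma supp_m i m : maxn (g i) m -> S m.
Proof.
  intros Mm. pose proof (max_T Mm) as Tm. split; auto.
  intros [j [zj [Lj [Tzm ND]]]].
  destruct (classic (i = j)) as [e|ne].
  - subst. apply ND. exists m. split; auto. left; auto.
  - destruct (ex_least i) as [zi Li]. destruct (max_prop Li Mm) as [_ lim].
    destruct (pred_lin HT (lt_le lim) (lt_le Tzm)) as [h|h].
    + destruct (cons_down ne Li Lj h) as [a [Ma La]].
      assert (a = m).
      { apply (anti Ma Mm). right. exact (tle_lt HT La Tzm). }
      subst. exact (tr_irr HT (x:=m) (tle_lt HT La Tzm)).
    + destruct (cons_down (not_eq_sym ne) Lj Li h) as [a [Ma La]].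
      apply ND. exists a. split; auto. right. exact (tle_lt HT La lim).
Qed.

Lemma supp_z i z : least (g i) z -> S z.
Proof.
  intros Lz. split. exact (z_T Lz).
  intros [j [zj [Lj [Tzz ND]]]].
  destruct (classic (i = j)) as [e|ne].
  - subst. rewrite (least_unique (gtree j) Lz Lj) in Tzz. exact (tr_irr HT Tzz).
  - apply ND. exact (cons_down (not_eq_sym ne) Lj Lz (lt_le Tzz)).
Qed.

Lemma gclass i v : nodes (g i) v -> least (g i) v \/ maxn (g i) v \/ impl (g i) v.
Proof.
  intros Nv. destruct (classic (least (g i) v)); auto.
  destruct (classic (maxn (g i) v)); auto. right; right. split; auto.
Qed.

Lemma gnode_HN i v : nodes (g i) v -> HN v.
Proof.
  intros Nv. destruct (gclass Nv) as [h|[h|h]].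
  - left. exact (supp_z h).
  - left. exact (supp_m h).
  - right. eauto.
Qed.

Lemma hlt_nodes x y : HL x y -> HN x /\ HN y.
Proof.
  intros [h|[h|[h|[h|h]]]].
  - destruct h as [a [b _]]. split; left; auto.
  - destruct h as [k [a [b _]]]. split; right; eauto.
  - destruct h as [k [a [b _]]]. split; [left|right; exists k]; auto.
  - destruct h as [k [a [b _]]]. split; [right; exists k|left]; auto.
  - destruct h as [k [j [_ [a [b _]]]]]. split; right; eauto.
Qed.

Lemma b1 x y : S x -> S y -> tlt T x y -> HL x y.
Proof. intros; left; auto. Qed.
Lemma b2 i x y : impl (g i) x -> impl (g i) y -> tlt (g i) x y -> HL x y.
Proof. intros; right; left; eauto. Qed.
Lemma b3 i x y z : S x -> impl (g i) y -> least (g i) z -> tle T x z -> HL x y.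
Proof. intros; right; right; left; eauto 10. Qed.
Lemma b4 i x y r : impl (g i) x -> S y -> maxn (g i) r -> tle T r y -> tlt (g i) x r -> HL x y.
Proof. intros. right; right; right; left. exists i. split; [auto|split;[auto|split;[exists r; split; auto|exists r; auto]]]. Qed.
Lemma b5 i j x y z r : i <> j -> impl (g i) x -> impl (g j) y -> least (g j) z ->
  maxn (g i) r -> tle T r z -> tlt (g i) x r -> HL x y.
Proof.
  intros. right; right; right; right. exists i, j.
  split;[auto|split;[auto|split;[auto|]]].
  exists z. split;[auto|split;[exists r; split; auto|exists r; auto]].
Qed.


Ltac tcontra := match goal with
 | h: supp _ _ ?y, h': impl (_ _) ?y |- _ => exfalso; exact (impl_notT h' (supp_T h))
 end.

Lemma hlt_trans x y w : HL x y -> HL y w -> HL x w.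
Proof.
  intros h1 h2.
  destruct h1 as [[Sx1 [Sy1 L1]]|[[k1 [Ix1 [Iy1 L1]]]|[[k1 [Sx1 [Iy1 [z1 [Lz1 T1]]]]]|[[k1 [Ix1 [Sy1 [D1 [r1 [Mr1 [Tr1 L1]]]]]]]|[k1 [j1 [N1 [Ix1 [Iy1 [z1 [Lz1 [D1 [r1 [Mr1 [Tr1 L1]]]]]]]]]]]]]]];
  destruct h2 as [[Sx2 [Sy2 L2]]|[[k2 [Ix2 [Iy2 L2]]]|[[k2 [Sx2 [Iy2 [z2 [Lz2 T2]]]]]|[[k2 [Ix2 [Sy2 [D2 [r2 [Mr2 [Tr2 L2]]]]]]]|[k2 [j2 [N2 [Ix2 [Iy2 [z2 [Lz2 [D2 [r2 [Mr2 [Tr2 L2]]]]]]]]]]]]]]];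
  try tcontra.
  - exact (b1 Sx1 Sy2 (tr_trans HT L1 L2)).
  - exact (b3 Sx1 Iy2 Lz2 (lt_le (lt_tle HT L1 T2))).
  - pose proof (impl_uniq Iy1 Ix2) as e; subst. exact (b2 Ix1 Iy2 (tr_trans (gtree _) L1 L2)).
  - pose proof (impl_uniq Iy1 Ix2) as e; subst. exact (b4 Ix1 Sy2 Mr2 Tr2 (tr_trans (gtree _) L1 L2)).
  - pose proof (impl_uniq Iy1 Ix2) as e; subst. exact (b5 N2 Ix1 Iy2 Lz2 Mr2 Tr2 (tr_trans (gtree _) L1 L2)).
  - pose proof (impl_uniq Iy1 Ix2) as e; subst. exact (b3 Sx1 Iy2 Lz1 T1).
  - pose proof (impl_uniq Iy1 Ix2) as e; subst. destruct (max_prop Lz1 Mr2) as [_ l].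
    exact (b1 Sx1 Sy2 (tle_lt HT T1 (lt_tle HT l Tr2))).
  - pose proof (impl_uniq Iy1 Ix2) as e; subst. destruct (max_prop Lz1 Mr2) as [_ l].
    exact (b3 Sx1 Iy2 Lz2 (lt_le (tle_lt HT T1 (lt_tle HT l Tr2)))).
  - exact (b4 Ix1 Sy2 Mr1 (lt_le (tle_lt HT Tr1 L2)) L1).
  - destruct (classic (k1 = k2)) as [e|ne].
    + subst. exfalso. destruct (max_prop Lz2 Mr1) as [_ l].
      exact (le_lt_false HT (tle_trans HT Tr1 T2) l).
    + exact (b5 ne Ix1 Iy2 Lz2 Mr1 (tle_trans HT Tr1 T2) L1).
  - pose proof (impl_uniq Iy1 Ix2) as e; subst. exact (b5 N1 Ix1 Iy2 Lz1 Mr1 Tr1 L1).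
  - pose proof (impl_uniq Iy1 Ix2) as e; subst. destruct (max_prop Lz1 Mr2) as [_ l].
    exact (b4 Ix1 Sy2 Mr1 (lt_le (tle_lt HT Tr1 (lt_tle HT l Tr2))) L1).
  - pose proof (impl_uniq Iy1 Ix2) as e; subst. destruct (max_prop Lz1 Mr2) as [_ l].
    assert (Le : tle T r1 z2) by exact (lt_le (tle_lt HT Tr1 (lt_tle HT l Tr2))).
    destruct (classic (k1 = j2)) as [e|ne].
    + subst. exfalso. destruct (max_prop Lz2 Mr1) as [_ l2]. exact (le_lt_false HT Le l2).
    + exact (b5 ne Ix1 Iy2 Lz2 Mr1 Le L1).
Qed.

Definition Low t x := (S x /\ tle T x t) \/
  (exists i r, impl (g i) x /\ maxn (g i) r /\ tlt (g i) x r /\ tle T r t).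

Lemma hc_lt x y : HL x y -> comparable H x y.
Proof. intros; left; right; auto. Qed.
Lemma hc_lt' x y : HL y x -> comparable H x y.
Proof. intros; right; right; auto. Qed.
Lemma hc_eq x : HN x -> comparable H x x.
Proof. intros; left; left; auto. Qed.

Lemma SI x y t i r : S x -> tle T x t -> impl (g i) y -> maxn (g i) r -> tlt (g i) y r ->
  tle T r t -> comparable H x y.
Proof.
  intros Sx Hxt Iy Mr Ly Hrt.
  destruct (pred_lin HT Hxt Hrt) as [Hxr|Hrx].
  - destruct Hxr as [[e _]|Hlt].
    + apply hc_lt'. apply (b4 Iy Sx Mr). left; split; [exact (eq_sym e)|exact (max_T Mr)]. exact Ly.
    + destruct (ex_least i) as [z Lz]. destruct (max_prop Lz Mr) as [_ lzr].
      destruct (pred_lin HT (lt_le Hlt) (lt_le lzr)) as [Hxz|Hzx].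
      * apply hc_lt. exact (b3 Sx Iy Lz Hxz).
      * destruct Hzx as [[e _]|Hzx].
        -- apply hc_lt. apply (b3 Sx Iy Lz). left. split; [exact (eq_sym e)|exact (supp_T Sx)].
        -- exfalso. destruct Sx as [_ NE]. apply NE. exists i, z. split; [exact Lz|split; [exact Hzx|]].
           intros [a [Ma La]]. pose proof (anti Ma Mr (lt_le (tle_lt HT La Hlt))) as e. subst a.
           exact (tr_irr HT (tle_lt HT La Hlt)).
  - apply hc_lt'. exact (b4 Iy Sx Mr Hrx Ly).
Qed.

Lemma II_ne i j x y ri rj : i <> j -> impl (g i) x -> maxn (g i) ri -> tlt (g i) x ri ->
  impl (g j) y -> maxn (g j) rj -> tlt (g j) y rj -> tle T ri rj -> HL x y.
Proof.
  intros ne Ix Mi Lx Iy Mj Ly Hij.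
  destruct (ex_least j) as [zj Lj]. destruct (max_prop Lj Mj) as [_ lj].
  destruct (pred_lin HT Hij (lt_le lj)) as [h|h].
  - exact (b5 ne Ix Iy Lj Mi h Lx).
  - destruct (ex_least i) as [zi Li]. destruct (max_prop Li Mi) as [_ li].
    destruct (pred_lin HT (lt_le li) h) as [h2|h2].
    + destruct (cons_down ne Li Lj h2) as [a [Ma La]].
      pose proof (anti Ma Mi (tle_trans HT La h)) as e. subst a.
      exact (b5 ne Ix Iy Lj Mi La Lx).
    + destruct (cons_down (not_eq_sym ne) Lj Li h2) as [a [Ma La]].
      assert (l : tlt T a rj) by exact (tle_lt HT La (lt_tle HT li Hij)).
      pose proof (anti Ma Mj (lt_le l)) as e. subst a. exfalso. exact (tr_irr HT l).
Qed.

Lemma gcomp_H k x y : impl (g k) x -> impl (g k) y -> comparable (g k) x y -> comparable H x y.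
Proof.
  intros Ix Iy [[[e _]|l]|[[e _]|l]].
  - subst. apply hc_eq. right; eauto.
  - apply hc_lt. exact (b2 Ix Iy l).
  - subst. apply hc_eq. right; eauto.
  - apply hc_lt'. exact (b2 Iy Ix l).
Qed.

Lemma II x y t i j ri rj : impl (g i) x -> maxn (g i) ri -> tlt (g i) x ri -> tle T ri t ->
  impl (g j) y -> maxn (g j) rj -> tlt (g j) y rj -> tle T rj t -> comparable H x y.
Proof.
  intros Ix Mi Lx Hi Iy Mj Ly Hj.
  destruct (classic (i = j)) as [e|ne].
  - subst j. assert (e : ri = rj).
    { destruct (pred_lin HT Hi Hj) as [h|h]. exact (anti Mi Mj h). exact (eq_sym (anti Mj Mi h)). }
    subst rj. apply (gcomp_H Ix Iy). exact (pred_lin (gtree i) (lt_le Lx) (lt_le Ly)).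
  - destruct (pred_lin HT Hi Hj) as [h|h].
    + apply hc_lt. exact (II_ne ne Ix Mi Lx Iy Mj Ly h).
    + apply hc_lt'. exact (II_ne (not_eq_sym ne) Iy Mj Ly Ix Mi Lx h).
Qed.

Lemma low_lin t x y : Low t x -> Low t y -> comparable H x y.
Proof.
  intros [[Sx Hx]|[i [r [Ix [Mr [Lx Hr]]]]]] [[Sy Hy]|[j [r' [Iy [Mr' [Ly Hr']]]]]].
  - destruct (pred_lin HT Hx Hy) as [[[e _]|l]|[[e _]|l]].
    + subst. apply hc_eq. left; auto.
    + apply hc_lt. exact (b1 Sx Sy l).
    + subst. apply hc_eq. left; auto.
    + apply hc_lt'. exact (b1 Sy Sx l).
  - exact (SI Sx Hx Iy Mr' Ly Hr').
  - apply comp_sym. exact (SI Sy Hy Ix Mr Lx Hr).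
  - exact (II Ix Mr Lx Hr Iy Mr' Ly Hr').
Qed.

Lemma low_from_S x w : HL x w -> S w -> Low w x.
Proof.
  intros h Sw.
  destruct h as [[Sx1 [Sy1 L1]]|[[k1 [Ix1 [Iy1 L1]]]|[[k1 [Sx1 [Iy1 [z1 [Lz1 T1]]]]]|[[k1 [Ix1 [Sy1 [D1 [r1 [Mr1 [Tr1 L1]]]]]]]|[k1 [j1 [N1 [Ix1 [Iy1 [z1 [Lz1 [D1 [r1 [Mr1 [Tr1 L1]]]]]]]]]]]]]]];
  try tcontra.
  - left. split; auto. right; auto.
  - right. exists k1, r1. auto.
Qed.

Lemma low_from_I x w k z : HL x w -> impl (g k) w -> least (g k) z ->
  (impl (g k) x /\ tlt (g k) x w) \/ Low z x.
Proof.
  intros h Iw Lz.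
  destruct h as [[Sx1 [Sy1 L1]]|[[k1 [Ix1 [Iy1 L1]]]|[[k1 [Sx1 [Iy1 [z1 [Lz1 T1]]]]]|[[k1 [Ix1 [Sy1 [D1 [r1 [Mr1 [Tr1 L1]]]]]]]|[k1 [j1 [N1 [Ix1 [Iy1 [z1 [Lz1 [D1 [r1 [Mr1 [Tr1 L1]]]]]]]]]]]]]]];
  try tcontra.
  - pose proof (impl_uniq Iy1 Iw) as e; subst. left; auto.
  - pose proof (impl_uniq Iy1 Iw) as e; subst.
    rewrite (least_unique (gtree _) Lz1 Lz) in T1. right; left; auto.
  - pose proof (impl_uniq Iy1 Iw) as e; subst.
    rewrite (least_unique (gtree _) Lz1 Lz) in Tr1. right; right. exists k1, r1. auto.
Qed.

Lemma low_to_impl y z k x : Low z y -> least (g k) z -> impl (g k) x -> HL y x.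
Proof.
  intros [[Sy Hy]|[i [r [Iy [Mr [Ly Hr]]]]]] Lz Ix.
  - exact (b3 Sy Ix Lz Hy).
  - destruct (classic (i = k)) as [e|ne].
    + subst. exfalso. destruct (max_prop Lz Mr) as [_ l]. exact (le_lt_false HT Hr l).
    + exact (b5 ne Iy Ix Lz Mr Hr Ly).
Qed.

Lemma pred_lin_H x y w : HL x w -> HL y w -> comparable H x y.
Proof.
  intros h1 h2.
  destruct (proj2 (hlt_nodes h1)) as [Sw|[k Iw]].
  - exact (low_lin (low_from_S h1 Sw) (low_from_S h2 Sw)).
  - destruct (ex_least k) as [z Lz].
    destruct (low_from_I h1 Iw Lz) as [[Ix Lx]|Lowx];
    destruct (low_from_I h2 Iw Lz) as [[Iy Ly]|Lowy].
    + apply (gcomp_H Ix Iy). exact (pred_lin (gtree k) (lt_le Lx) (lt_le Ly)).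
    + apply hc_lt'. exact (low_to_impl Lowy Lz Ix).
    + apply hc_lt. exact (low_to_impl Lowx Lz Iy).
    + exact (low_lin Lowx Lowy).
Qed.

Lemma tleH_trans x y z : tle H x y -> tle H y z -> tle H x z.
Proof.
  intros [[e n]|l] [[e2 n2]|l2].
  - subst. left; auto.
  - subst. right; exact l2.
  - subst. right; exact l.
  - right. exact (hlt_trans l l2).
Qed.

Lemma tleH_lt x y z : tle H x y -> HL y z -> HL x z.
Proof. intros [[e n]|l] l2. subst; exact l2. exact (hlt_trans l l2). Qed.

Lemma DC B x y : branch H B -> B y -> tle H x y -> B x.
Proof.
  intros [[BN BC] BM] By Hxy.
  assert (Nx : HN x).
  { destruct Hxy as [[e n]|l]. subst; exact n. exact (proj1 (hlt_nodes l)). }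
  assert (key : forall a, B a -> comparable H a x).
  { intros a Ba. destruct (BC a y Ba By) as [Hay|Hya].
    - destruct Hay as [[e _]|Lay].
      + subst. right. exact Hxy.
      + destruct Hxy as [[e _]|Lxy].
        * subst. left. right. exact Lay.
        * exact (pred_lin_H Lay Lxy).
    - right. exact (tleH_trans Hxy Hya). }
  apply (BM (fun v => B v \/ v = x)).
  - split.
    + intros v [Bv|e]. exact (BN v Bv). subst. exact Nx.
    + intros a b [Ba|ea] [Bb|eb].
      * exact (BC a b Ba Bb).
      * subst b. exact (key a Ba).
      * subst a. apply comp_sym. exact (key b Bb).
      * subst. apply hc_eq. exact Nx.
  - intros v Bv; left; auto.
  - right; reflexivity.
Qed.

Lemma emb i x y : nodes (g i) x -> nodes (g i) y -> tlt (g i) x y -> HL x y.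
Proof.
  intros Nx Ny l.
  destruct (gclass Nx) as [Lx|[Mx|Ix]].
  - destruct (gclass Ny) as [Ly|[My|Iy]].
    + exfalso. exact (le_lt_false (gtree i) (proj2 Ly x Nx) l).
    + exact (b1 (supp_z Lx) (supp_m My) (proj2 (max_prop Lx My))).
    + exact (b3 (supp_z Lx) Iy Lx (le_refl (z_T Lx))).
  - exfalso. apply (proj2 Mx). exists y; auto.
  - destruct (gclass Ny) as [Ly|[My|Iy]].
    + exfalso. exact (le_lt_false (gtree i) (proj2 Ly x Nx) l).
    + exact (b4 Ix (supp_m My) My (le_refl (max_T My)) l).
    + exact (b2 Ix Iy l).
Qed.

Lemma embH i x y : nodes (g i) x -> nodes (g i) y -> tle (g i) x y -> tle H x y.
Proof.
  intros Nx Ny [[e n]|l].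
  - subst. left. split; auto. exact (gnode_HN n).
  - right. exact (emb Nx Ny l).
Qed.

Lemma HL_in_g i x y : impl (g i) x -> nodes (g i) y -> HL x y -> tlt (g i) x y.
Proof.
  intros Ix Ny [h|[h|[h|[h|h]]]].
  - destruct h as [Sx _]. exfalso. exact (impl_notT Ix (supp_T Sx)).
  - destruct h as [k [Ix' [Iy' L]]]. rewrite (impl_uniq Ix' Ix) in L. exact L.
  - destruct h as [k [Sx _]]. exfalso. exact (impl_notT Ix (supp_T Sx)).
  - destruct h as [k [Ix' [Sy [_ [r [Mr [Tr L]]]]]]].
    rewrite (impl_uniq Ix' Ix) in Mr, L.
    destruct (gclass Ny) as [Ly|[My|Iy]].
    + exfalso. destruct (max_prop Ly Mr) as [_ l]. exact (le_lt_false HT Tr l).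
    + rewrite <- (anti Mr My Tr). exact L.
    + exfalso. exact (impl_notT Iy (supp_T Sy)).
  - destruct h as [k [j [ne [Ix' [Iy' _]]]]]. rewrite (impl_uniq Ix' Ix) in ne.
    exfalso. destruct (gclass Ny) as [Ly|[My|Iy]].
    + exact (impl_notT Iy' (z_T Ly)).
    + exact (impl_notT Iy' (max_T My)).
    + exact (ne (impl_uniq Iy Iy')).
Qed.

Lemma HL_from_max i m y : maxn (g i) m -> (maxn (g i) y \/ impl (g i) y) -> HL m y -> False.
Proof.
  intros Mm Hy [h|[h|[h|[h|h]]]].
  - destruct h as [Sm [Sy L]]. destruct Hy as [My|Iy].
    + rewrite (anti Mm My (lt_le L)) in L. exact (tr_irr HT L).
    + exact (impl_notT Iy (supp_T Sy)).
  - destruct h as [k [Im _]]. exact (impl_notT Im (max_T Mm)).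
  - destruct h as [k [Sm [Iy [z [Lz Tmz]]]]]. destruct Hy as [My|Iy0].
    + exact (impl_notT Iy (max_T My)).
    + rewrite <- (impl_uniq Iy0 Iy) in Lz. destruct (max_prop Lz Mm) as [_ l].
      exact (le_lt_false HT Tmz l).
  - destruct h as [k [Im _]]. exact (impl_notT Im (max_T Mm)).
  - destruct h as [k [j [_ [Im _]]]]. exact (impl_notT Im (max_T Mm)).
Qed.

Lemma gcomp i x y : nodes (g i) x -> nodes (g i) y -> comparable H x y -> comparable (g i) x y.
Proof.
  intros Nx Ny hc.
  destruct (gclass Nx) as [Lx|[Mx|Ix]].
  - left. exact (proj2 Lx y Ny).
  - destruct (gclass Ny) as [Ly|[My|Iy]].
    + right. exact (proj2 Ly x Nx).
    + destruct hc as [[[e _]|l]|[[e _]|l]].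
      * left; left; auto.
      * exfalso. exact (HL_from_max Mx (or_introl My) l).
      * right; left; auto.
      * exfalso. exact (HL_from_max My (or_introl Mx) l).
    + destruct hc as [[[e _]|l]|[[e _]|l]].
      * left; left; auto.
      * exfalso. exact (HL_from_max Mx (or_intror Iy) l).
      * right; left; auto.
      * right; right. exact (HL_in_g Iy Nx l).
  - destruct (gclass Ny) as [Ly|[My|Iy]].
    + right. exact (proj2 Ly x Nx).
    + destruct hc as [[[e _]|l]|[[e _]|l]].
      * left; left; auto.
      * left; right. exact (HL_in_g Ix Ny l).
      * right; left; auto.
      * exfalso. exact (HL_from_max My (or_intror Ix) l).
    + destruct hc as [[[e _]|l]|[[e _]|l]].
      * left; left; auto.
      * left; right. exact (HL_in_g Ix Ny l).
      * right; left; auto.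
      * right; right. exact (HL_in_g Iy Nx l).
Qed.

Lemma region i v b : (least (g i) v \/ impl (g i) v) -> HL v b ->
  impl (g i) b \/ exists m, maxn (g i) m /\ tle H m b.
Proof.
  intros [Lv|Iv] h.
  - destruct h as [h|[h|[h|[h|h]]]].
    + destruct h as [_ [Sb L]]. right.
      destruct (classic (down T (maxn (g i)) b)) as [[m [Mm Tm]]|nd].
      * exists m. split; auto. destruct Tm as [[e _]|l].
        -- left. split; auto. left. exact (supp_m Mm).
        -- right. exact (b1 (supp_m Mm) Sb l).
      * exfalso. destruct Sb as [_ NE]. apply NE. exists i, v. auto.
    + destruct h as [k [Iv' _]]. exfalso. exact (impl_notT Iv' (z_T Lv)).
    + destruct h as [k [Sv [Ib [z [Lz Tvz]]]]].
      destruct (classic (i = k)) as [e|ne].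
      * left. rewrite e. exact Ib.
      * right. destruct (cons_down ne Lv Lz Tvz) as [m [Mm Tmz]]. exists m. split; auto.
        right. exact (b3 (supp_m Mm) Ib Lz Tmz).
    + destruct h as [k [Iv' _]]. exfalso. exact (impl_notT Iv' (z_T Lv)).
    + destruct h as [k [j [_ [Iv' _]]]]. exfalso. exact (impl_notT Iv' (z_T Lv)).
  - destruct h as [h|[h|[h|[h|h]]]].
    + destruct h as [Sv _]. exfalso. exact (impl_notT Iv (supp_T Sv)).
    + destruct h as [k [Iv' [Ib _]]]. left. rewrite (impl_uniq Iv Iv'). exact Ib.
    + destruct h as [k [Sv _]]. exfalso. exact (impl_notT Iv (supp_T Sv)).
    + destruct h as [k [Iv' [Sb [_ [r [Mr [Tr L]]]]]]]. right.
      rewrite <- (impl_uniq Iv Iv') in Mr. exists r. split; auto.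
      destruct Tr as [[e _]|l].
      * left. split; auto. left. exact (supp_m Mr).
      * right. exact (b1 (supp_m Mr) Sb l).
    + destruct h as [k [j [ne [Iv' [Ib [z [Lz [_ [r [Mr [Tr L]]]]]]]]]]]. right.
      rewrite <- (impl_uniq Iv Iv') in Mr. exists r. split; auto.
      right. exact (b3 (supp_m Mr) Ib Lz Tr).
Qed.


Lemma partA B i : branch H B -> (exists v, B v /\ nodes (g i) v) ->
  branch (g i) (fun v => B v /\ nodes (g i) v).
Proof.
  intros HB [v0 [Bv0 Nv0]].
  pose proof HB as [[BN BC] BM].
  split.
  - split.
    + intros x [_ n]; exact n.
    + intros x y [Bx Nx] [By Ny]. exact (gcomp Nx Ny (BC x y Bx By)).
  - intros C [CN CC] Sub c Cc.
    assert (Nc := CN c Cc). split; [|exact Nc].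
    destruct (CC c v0 Cc (Sub v0 (conj Bv0 Nv0))) as [Hcv|Hvc].
    + exact (DC HB Bv0 (embH Nc Nv0 Hcv)).
    + destruct Hvc as [[e _]|lvc].
      { subst; exact Bv0. }
      assert (HLvc := emb Nv0 Nc lvc).
      assert (Vv : least (g i) v0 \/ impl (g i) v0).
      { destruct (gclass Nv0) as [h|[h|h]]; auto. exfalso. apply (proj2 h). exists c; exact lvc. }
      assert (key : forall b, B b -> comparable H b c).
      { intros b Bb. destruct (BC b v0 Bb Bv0) as [Hbv|Hvb].
        - apply hc_lt. exact (tleH_lt Hbv HLvc).
        - destruct Hvb as [[e _]|Lvb].
          + rewrite <- e. apply hc_lt. exact HLvc.
          + destruct (region Vv Lvb) as [Ib|[m [Mm Hmb]]].
            * assert (Cb : C b) by exact (Sub b (conj Bb (proj1 Ib))).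
              destruct (CC b c Cb Cc) as [h|h].
              -- left. exact (embH (proj1 Ib) Nc h).
              -- right. exact (embH Nc (proj1 Ib) h).
            * assert (Bm := DC HB Bb Hmb).
              assert (Nm : nodes (g i) m) by exact (proj1 Mm).
              assert (Cm : C m) by exact (Sub m (conj Bm Nm)).
              destruct (CC m c Cm Cc) as [[[e _]|l]|Hcm].
              -- right. rewrite <- e. exact Hmb.
              -- exfalso. apply (proj2 Mm). exists c; exact l.
              -- right. exact (tleH_trans (embH Nc Nm Hcm) Hmb). }
      apply (BM (fun v => B v \/ v = c)).
      * split.
        -- intros v [Bv|e]. exact (BN v Bv). subst. exact (gnode_HN Nc).
        -- intros a b [Ba|ea] [Bb|eb].
           ++ exact (BC a b Ba Bb).
           ++ subst b. exact (key a Ba).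
           ++ subst a. apply comp_sym. exact (key b Bb).
           ++ subst. apply hc_eq. exact (gnode_HN Nc).
      * intros v Bv; left; auto.
      * right; reflexivity.
Qed.

Lemma partB B : branch H B -> (forall i, bounded_chains (g i)) ->
  forall b, B b -> exists c, B c /\ S c /\ tle H b c.
Proof.
  intros HB Hbc b Bb. pose proof HB as [[BN BC] BM].
  destruct (BN b Bb) as [Sb|[i Ib]].
  - exists b. split; [exact Bb|split; [exact Sb|]]. left. split; [reflexivity|left; exact Sb].
  - pose (V := fun v => B v /\ nodes (g i) v).
    assert (HV : branch (g i) V) by exact (partA HB (ex_intro _ b (conj Bb (proj1 Ib)))).
    destruct HV as [[VN VC] VM].
    destruct (Hbc i V (conj VN VC) (ex_intro _ b (conj Bb (proj1 Ib)))) as [z [Nz Hz]].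
    assert (Vz : V z).
    { apply (VM (fun v => V v \/ v = z)).
      - split.
        + intros v [Vv|e]; [exact (VN v Vv)| subst; exact Nz].
        + intros x y [Vx|ex] [Vy|ey].
          * exact (VC x y Vx Vy).
          * subst y. left. exact (Hz x Vx).
          * subst x. right. exact (Hz y Vy).
          * subst. left; left; auto.
      - intros v Vv; left; auto.
      - right; reflexivity. }
    assert (Mz : maxn (g i) z).
    { split; auto. intros [w l].
      assert (Nw : nodes (g i) w) by exact (proj2 (tr_nodes (gtree i) l)).
      assert (Vw : V w).
      { apply (VM (fun v => V v \/ v = w)).
        - split.
          + intros v [Vv|e]; [exact (VN v Vv)|subst; exact Nw].
          + intros x y [Vx|ex] [Vy|ey].
            * exact (VC x y Vx Vy).
            * subst y. left; right. exact (tle_lt (gtree i) (Hz x Vx) l).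
            * subst x. right; right. exact (tle_lt (gtree i) (Hz y Vy) l).
            * subst. left; left; auto.
        - intros v Vv; left; auto.
        - right; reflexivity. }
      exact (le_lt_false (gtree i) (Hz w Vw) l). }
    exists z. split; [exact (proj1 Vz)|split; [exact (supp_m Mz)|]].
    destruct (Hz b (conj Bb (proj1 Ib))) as [[e _]|l].
    + exfalso. subst. exact (proj2 (proj2 Ib) Mz).
    + right. exact (b4 Ib (supp_m Mz) Mz (le_refl (max_T Mz)) l).
Qed.

End Hy.

Theorem mainTheorem9 (U : Type) (T : tree U) (I : Type) (g : I -> tree U)
  (B : U -> Prop) :
  is_tree T ->
  consistent T g ->
  branch (hybr T g) B ->
  (* (a) *)
  (forall i, (exists v, B v /\ nodes (g i) v) ->
     branch (g i) (fun v => B v /\ nodes (g i) v)) /\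
  (* (b) *)
  ((forall i, bounded_chains (g i)) ->
     forall b, B b -> exists c, B c /\ supp T g c /\ tle (hybr T g) b c).
Proof.
  intros HT Hc HB. split.
  - intros i Hi. exact (partA HT Hc HB Hi).
  - intros Hbc b Bb. exact (partB HT Hc HB Hbc Bb).
Qed.
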